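(* Let $\mu$ be a Borel probability measure on $\mathbb{R}$ satisfying Assumption A (see context), let $t>1$, and let $E$ be a zero of $m_\mu$. Then there exists a constant $M>0$ such that $\mathrm{dist}(\omega_t(z),E)\ge M$ for all $z\in\mathbb{R}$.
   Context: Assumption A: $n_{\mathrm{ac}},n_{\mathrm{pp}},n^{\mathrm{out}}_{\mathrm{pp}}\ge1$ integers; $\mu$ is a compactly supported Borel probability measure on $\mathbb{R}$ whose singular part is supported on a finite set $\{x_1,\dots,x_{n_{\mathrm{pp}}}\}$, whose absolutely continuous part $\mu_{\mathrm{ac}}$ is supported on $n_{\mathrm{ac}}$ intervals $[E_j^-,E_j^+]$, with exactly $n^{\mathrm{out}}_{\mathrm{pp}}$ atoms outside $\mathrm{supp}(\mu_{\mathrm{ac}})$, no atom at the endpoints $E_j^\pm$, and density $\rho$ with $C_j^{-1}<\rho(x)/\big((x-E_j^-)^{t_j^-}(E_j^+-x)^{t_j^+}\big)<C_j$ a.e. on $[E_j^-,E_j^+]$ for some $-1<t_j^\pm<1$, $C_j\ge1$. $m_\mu(z)=\int\frac{1}{x-z}\mu(dx)$ (a zero of $m_\mu$ is a real point $E$ where $m_\mu(E)=0$), $F_\mu=-1/m_\mu$. $\omega_t:\mathbb{C}^+\to\mathbb{C}^+$ is the analytic subordination function with $\mathrm{Im}\,\omega_t(z)\ge\mathrm{Im}\,z$, $\omega_t(i\eta)/(i\eta)\to1$, $t\omega_t(z)-z=(t-1)F_\mu(\omega_t(z))$, extended continuously to $\mathbb{C}^+\cup\mathbb{R}$ (values in $\mathbb{C}^+\cup\mathbb{R}\cup\{\infty\}$).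 *)

(* Defs.v *)
From HB Require Import structures.
From mathcomp Require Import all_boot all_order all_algebra.
From mathcomp Require Import all_classical all_reals all_analysis.
From mathcomp Require Import complex.
Set Implicit Arguments. Unset Strict Implicit. Unset Printing Implicit Defensive.
Import Order.TTheory GRing.Theory Num.Theory.
Import numFieldNormedType.Exports.
Local Open Scope classical_set_scope.
Local Open Scope ring_scope.

Section Defs.
Variable R : realType.

Definition cre (z : R[i]) : R := let: Complex a _ := z in a.
Definition cim (z : R[i]) : R := let: Complex _ b := z in b.

Definition cabs (z : R[i]) : R := Num.sqrt (cre z ^+ 2 + cim z ^+ 2).

Definition cR (x : R) : R[i] := Complex x 0.

Definition Cplus (z : R[i]) : Prop := 0 < cim z.

(* Stieltjes transform m_mu(z) = \int 1/(x - z) mu(dx), written via its real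
   and imaginary parts:  1/(x-z) = ((x - cre z) + i cim z) / ((x-cre z)^2+(cim z)^2). *)
Definition stieltjes (mu : probability R R) (z : R[i]) : R[i] :=
  Complex
    (\int[mu]_(x in setT) ((x - cre z) / ((x - cre z) ^+ 2 + cim z ^+ 2)))
    (\int[mu]_(x in setT) (cim z / ((x - cre z) ^+ 2 + cim z ^+ 2))).

Definition Fmu (mu : probability R R) (z : R[i]) : R[i] := - (stieltjes mu z)^-1.

(* E is a zero of m_mu: the boundary value m_mu(E) := lim_{eta -> 0+} m_mu(E + i eta)
   exists and equals 0. *)
Definition stieltjes_zero (mu : probability R R) (E : R) : Prop :=
  forall eps : R, 0 < eps -> exists2 d : R, 0 < d &
    forall eta : R, 0 < eta -> eta < d -> cabs (stieltjes mu (Complex E eta)) < eps.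

Definition analytic_Cplus (f : R[i] -> R[i]) : Prop :=
  forall z, Cplus z -> exists f' : R[i], forall eps : R, 0 < eps ->
    exists2 d : R, 0 < d & forall h : R[i], h != 0 -> cabs h < d ->
      cabs ((f (z + h) - f z) / h - f') < eps.

Definition subordination (mu : probability R R) (t : R) (omega : R[i] -> R[i]) : Prop :=
  [/\ analytic_Cplus omega,
      (forall z, Cplus z -> cim z <= cim (omega z)),
      (forall eps : R, 0 < eps -> exists K : R, forall eta : R, K < eta ->
         cabs (omega (Complex 0 eta) / Complex 0 eta - 1) < eps) &
      (forall z, Cplus z ->
         cR t * omega z - z = cR (t - 1) * Fmu mu (omega z))].

(* omegab : R -> option R[i] is the continuous extension of omega to the real
   line, with values in the Riemann sphere (None stands for infinity):
   omega z -> omegab x as z -> x within C^+. *)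
Definition boundary_extension (omega : R[i] -> R[i]) (omegab : R -> option R[i]) : Prop :=
  forall x : R,
    match omegab x with
    | Some w => forall eps : R, 0 < eps -> exists2 d : R, 0 < d &
        forall z, Cplus z -> cabs (z - cR x) < d -> cabs (omega z - w) < eps
    | None => forall K : R, exists2 d : R, 0 < d &
        forall z, Cplus z -> cabs (z - cR x) < d -> K < cabs (omega z)
    end.

Definition assumptionA (nac npp nout : nat) (mu : probability R R) : Prop :=
  [/\ (1 <= nac)%N, (1 <= npp)%N, (1 <= nout)%N &
  exists (Em Ep tm tp C : 'I_nac -> R) (xs ws : 'I_npp -> R) (rho : R -> R),
    [/\
        (forall j, Em j < Ep j) /\
        (forall i j, i != j -> Ep i < Em j \/ Ep j < Em i),
        injective xs /\ (forall i, 0 < ws i),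
        [/\ measurable_fun setT rho, (forall x, 0 <= rho x),
            (forall x, (forall j, x \notin `[Em j, Ep j]) -> rho x = 0) &
            (forall A : set R, measurable A ->
               mu A = (\int[lebesgue_measure]_(x in A) (rho x)%:E +
                       \sum_(i < npp) (ws i)%:E * \d_(xs i) A)%E)],
        (forall j, [/\ -1 < tm j < 1, -1 < tp j < 1, 1 <= C j &
           ({ae lebesgue_measure, forall x, x \in `[Em j, Ep j] ->
              ((C j)^-1 < rho x / ((x - Em j) `^ (tm j) * (Ep j - x) `^ (tp j)) < C j)})]) &
        (forall i j, xs i != Em j /\ xs i != Ep j) /\
        (* exactly nout atoms outside supp(mu_ac) = union of the intervals *)
        #|[set i : 'I_npp | [forall j, (xs i < Em j) || (Ep j < xs i)]]| = nout]].

End Defs.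

(* Main.v *)
Require Import Defs.
From HB Require Import structures.
From mathcomp Require Import all_boot all_order all_algebra.
From mathcomp Require Import all_classical all_reals all_analysis.
From mathcomp Require Import complex measurable_realfun.
From mathcomp Require Import ring lra.
Import Order.TTheory GRing.Theory Num.Theory.
Import numFieldNormedType.Exports.
Set Implicit Arguments. Unset Strict Implicit. Unset Printing Implicit Defensive.
Local Open Scope classical_set_scope.
Local Open Scope ring_scope.

Section S.
Variable R : realType.

Definition good (f : R -> R) := continuous f /\ exists B, forall x, `|f x| <= B.

Lemma goodD f g : good f -> good g -> good (fun x => f x + g x).
Proof.
move=> [cf [B fB]] [cg [C gC]]; split.
  by move=> x; apply: continuousD; [apply: cf|apply: cg].
exists (B + C) => x; apply: le_trans (ler_normD _ _) _; exact: lerD.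
Qed.

Lemma goodN f : good f -> good (fun x => - f x).
Proof.
move=> [cf [B fB]]; split; first by move=> x; apply: continuousN; apply: cf.
by exists B => x; rewrite normrN.
Qed.

Lemma goodB f g : good f -> good g -> good (fun x => f x - g x).
Proof. by move=> gf gg; apply: goodD => //; apply: goodN. Qed.

Lemma goodZ k f : good f -> good (fun x => k * f x).
Proof.
move=> [cf [B fB]]; split.
  by move=> x; apply: (continuousM (s:=fun=> k)); [apply: cvg_cst|apply: cf].
exists (`|k| * B) => x; rewrite normrM; apply: ler_wpM2l => //.
Qed.

Lemma cont_P (a b : R) : continuous (fun x : R => (x - a) ^+ 2 + b ^+ 2).
Proof.
move=> x; apply: (continuousD (f:=fun x => (x - a) ^+ 2) (g:=fun=> b ^+ 2)); last exact: cvg_cst.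
apply: (continuous_comp (f:=fun x => x - a) (g:=fun y => y ^+ 2)); last exact: exprn_continuous.
by apply: (@cvgB _ _ _ _ _ id (fun=> a)); [exact: cvg_id | exact: cvg_cst].
Qed.

Lemma good_invP (a b : R) : b != 0 -> good (fun x => ((x - a) ^+ 2 + b ^+ 2)^-1).
Proof.
move=> b0; have Pp x : 0 < (x - a) ^+ 2 + b ^+ 2.
  by apply: ltr_wpDl; [exact: sqr_ge0 | rewrite lt_def sqrf_eq0 b0 sqr_ge0].
split.
  move=> x; apply: (continuousV (s:=fun x => (x - a) ^+ 2 + b ^+ 2)); first by rewrite gt_eqF.
  exact: cont_P.
exists (b ^+ 2)^-1 => x; rewrite ger0_norm; last by rewrite invr_ge0 ltW.
rewrite lef_pV2 ?posrE ?Pp //; last by rewrite lt_def sqrf_eq0 b0 sqr_ge0.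
by rewrite lerDr sqr_ge0.
Qed.

Lemma good_frac (a b : R) : b != 0 ->
  good (fun x => (x - a) / ((x - a) ^+ 2 + b ^+ 2)).
Proof.
move=> b0; have Pp x : 0 < (x - a) ^+ 2 + b ^+ 2.
  by apply: ltr_wpDl; [exact: sqr_ge0 | rewrite lt_def sqrf_eq0 b0 sqr_ge0].
have [ci _] := (@good_invP a b b0).
split.
  move=> x; apply: (continuousM (s:=fun x => x - a)); last exact: ci.
  by apply: (@cvgB _ _ _ _ _ id (fun=> a)); [exact: cvg_id | exact: cvg_cst].
exists (`|b|^-1) => x; rewrite normrM normfV (ger0_norm (ltW (Pp x))).
have bp : 0 < `|b| by rewrite normr_gt0.
rewrite ler_pdivrMr ?Pp // mulrC ler_pdivlMr //.
have h1 : `|x - a| ^+ 2 = (x - a) ^+ 2 by rewrite real_normK ?num_real.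
have h2 : `|b| ^+ 2 = b ^+ 2 by rewrite real_normK ?num_real.
rewrite -h1 -h2; have := normr_ge0 (x - a); nra.
Qed.

End S.
Arguments good {R}.


Section P.
Variable R : realFieldType.

Lemma pw (p q b e I1 I2 S dl l : R) : 0 < b -> 0 < e -> 0 < l -> 0 <= dl ->
  S ^+ 2 = I1 ^+ 2 + I2 ^+ 2 -> 0 <= S ->
  (q - p) ^+ 2 + (b - e) ^+ 2 <= 4 * dl ^+ 2 ->
  I1 * (p / (p ^+ 2 + b ^+ 2) - q / (q ^+ 2 + e ^+ 2)) +
  I2 * (b / (p ^+ 2 + b ^+ 2) - e / (q ^+ 2 + e ^+ 2)) <=
  S * dl * (l * (p ^+ 2 + b ^+ 2)^-1 + l^-1 * (q ^+ 2 + e ^+ 2)^-1).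
Proof.
move=> b0 e0 l0 dl0 hS S0 hD.
have P0 : 0 < p ^+ 2 + b ^+ 2 by apply: ltr_wpDl; [exact: sqr_ge0| exact: exprn_gt0].
have Q0 : 0 < q ^+ 2 + e ^+ 2 by apply: ltr_wpDl; [exact: sqr_ge0| exact: exprn_gt0].
set P := p ^+ 2 + b ^+ 2 in P0 *; set Q := q ^+ 2 + e ^+ 2 in Q0 *.
set u := P^-1; set v := Q^-1; set k := l^-1.
have hu : P * u = 1 by rewrite mulfV // gt_eqF.
have hv : Q * v = 1 by rewrite mulfV // gt_eqF.
have hk : l * k = 1 by rewrite mulfV // gt_eqF.
have u0 : 0 < u by rewrite invr_gt0.
have v0 : 0 < v by rewrite invr_gt0.
have k0 : 0 < k by rewrite invr_gt0.
rewrite /= -/u -/v.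
set h1 := p * u - q * v; set h2 := b * u - e * v.
set Y := I1 * h1 + I2 * h2.
have cs : Y ^+ 2 <= S ^+ 2 * (h1 ^+ 2 + h2 ^+ 2).
  rewrite hS /Y; have := sqr_ge0 (I1 * h2 - I2 * h1); nra.
have hh : h1 ^+ 2 + h2 ^+ 2 = ((q - p) ^+ 2 + (b - e) ^+ 2) * (u * v).
  apply/eqP; rewrite -subr_eq0; apply/eqP.
  have -> : h1 ^+ 2 + h2 ^+ 2 - ((q - p) ^+ 2 + (b - e) ^+ 2) * (u * v)
     = (u - v) * (P * u - Q * v) by rewrite /h1 /h2 /P /Q; ring.
  by rewrite hu hv subrr mulr0.
have uv0 : 0 < u * v by exact: mulr_gt0.
have h4 : 4 * (u * v) <= (l * u + k * v) ^+ 2.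
  have := sqr_ge0 (l * u - k * v).
  have -> : (l * u + k * v) ^+ 2 = (l * u - k * v) ^+ 2 + 4 * (l * k) * (u * v) by ring.
  rewrite hk; lra.
have c0 : 0 <= S * dl * (l * u + k * v).
  by apply: mulr_ge0; [exact: mulr_ge0 | apply: addr_ge0; apply: ltW; exact: mulr_gt0].
have fin : Y ^+ 2 <= (S * dl * (l * u + k * v)) ^+ 2.
  apply: (le_trans cs); rewrite hh.
  have -> : (S * dl * (l * u + k * v)) ^+ 2 = S ^+ 2 * dl ^+ 2 * (l * u + k * v) ^+ 2 by ring.
  have S20 : 0 <= S ^+ 2 by exact: sqr_ge0.
  have d20 : 0 <= dl ^+ 2 by exact: sqr_ge0.
  have A : ((q - p) ^+ 2 + (b - e) ^+ 2) * (u * v) <= 4 * dl ^+ 2 * (u * v).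
    by apply: ler_wpM2r => //; exact: ltW.
  have B : 4 * dl ^+ 2 * (u * v) <= dl ^+ 2 * (l * u + k * v) ^+ 2.
    by rewrite -mulrA mulrCA; apply: ler_wpM2l.
  rewrite -mulrA; apply: ler_wpM2l => //; exact: le_trans A B.
move: fin c0; set Z := S * dl * (l * u + k * v); nra.
Qed.

End P.


Section T.
Variable R : rcfType.

Lemma sqrt_le (X Y : R) : 0 <= Y -> X <= Y ^+ 2 -> Num.sqrt X <= Y.
Proof.
move=> Y0 h; rewrite -(ger0_norm Y0) -sqrtr_sqr ler_sqrt //; exact: sqr_ge0.
Qed.

Lemma tri (u1 u2 d1 d2 : R) :
  Num.sqrt ((u1 + d1) ^+ 2 + (u2 + d2) ^+ 2) <=
  Num.sqrt (u1 ^+ 2 + u2 ^+ 2) + Num.sqrt (d1 ^+ 2 + d2 ^+ 2).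
Proof.
have U0 : 0 <= u1 ^+ 2 + u2 ^+ 2 by apply: addr_ge0; exact: sqr_ge0.
have D0 : 0 <= d1 ^+ 2 + d2 ^+ 2 by apply: addr_ge0; exact: sqr_ge0.
have hU := sqr_sqrtr U0; have hD := sqr_sqrtr D0.
have sU0 := sqrtr_ge0 (u1 ^+ 2 + u2 ^+ 2); have sD0 := sqrtr_ge0 (d1 ^+ 2 + d2 ^+ 2).
set sU := Num.sqrt _ in hU sU0 *; set sD := Num.sqrt _ in hD sD0 *.
apply: sqrt_le; first exact: addr_ge0.
have cs : (u1 * d1 + u2 * d2) ^+ 2 <= (sU * sD) ^+ 2.
  rewrite exprMn hU hD; have := sqr_ge0 (u1 * d2 - u2 * d1); nra.
have cs2 : u1 * d1 + u2 * d2 <= sU * sD.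
  have p0 : 0 <= sU * sD by exact: mulr_ge0.
  move: cs p0; set A := u1 * d1 + u2 * d2; set B := sU * sD; nra.
have -> : (sU + sD) ^+ 2 = sU ^+ 2 + sD ^+ 2 + 2 * (sU * sD) by ring.
rewrite hU hD; nra.
Qed.

End T.


Unset Implicit Arguments.
Section K.
Variable R : realType.
Variable mu : probability R R.

Lemma int_good {f : R -> R} : good f -> mu.-integrable setT (EFin \o f).
Proof.
move=> [cf [B fB]]; apply: measurable_bounded_integrable => //.
- by apply: (le_lt_trans (probability_le1 mu _)) => //; rewrite ltry.
- exact: continuous_measurable_fun.
- exists B; split; first by rewrite num_real.
  move=> M BM x _ /=; exact: le_trans (fB x) (ltW BM).
Qed.

Definition Az (z : R[i]) := \int[mu]_(x in setT) ((x - cre z) ^+ 2 + cim z ^+ 2)^-1.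

Lemma im_m (z : R[i]) : 0 < cim z -> cim (stieltjes mu z) = cim z * Az z.
Proof.
move=> b0; rewrite /stieltjes /Az /=.
rewrite -RintegralZl //; apply: int_good; apply: good_invP; exact: lt0r_neq0.
Qed.

Lemma key (z : R[i]) (E dl ew ka a0 : R) : 0 < dl -> 0 < cim z ->
  (cre z - E) ^+ 2 + cim z ^+ 2 < dl ^+ 2 ->
  cabs (stieltjes mu (Complex E dl)) <= ew -> 0 < a0 -> a0 <= Az z ->
  ew <= ka / 3 -> ew <= ka * Num.sqrt a0 / 3 -> dl <= ka / 3 ->
  cabs (stieltjes mu z) ^+ 2 <= ka ^+ 2 * Az z.
Proof.
move=> dl0 b0 hz hw a00 ha0 ew1 ew2 dl1.
case: z b0 hz ha0 => a b /= b0 hz ha0.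
have bn : b != 0 by exact: lt0r_neq0.
have dn : dl != 0 by exact: lt0r_neq0.
have ifrz := int_good (good_frac a bn).
have ifiz := int_good (goodZ b (good_invP a bn)).
have ifrw := int_good (good_frac E dn).
have ifiw := int_good (goodZ dl (good_invP E dn)).
have iAz := int_good (good_invP a bn).
have iAw := int_good (good_invP E dn).
move: hw; rewrite /cabs /= => hw.
set Rz := \int[mu]_(x in _) ((x - a) / _).
set Iz := \int[mu]_(x in _) (b / _).
set Rw := \int[mu]_(x in _) ((x - E) / _) in hw.
set Iw := \int[mu]_(x in _) (dl / _) in hw.
set I1 := Rz - Rw; set I2 := Iz - Iw.
have hS0 : 0 <= I1 ^+ 2 + I2 ^+ 2 by apply: addr_ge0; exact: sqr_ge0.
set S := Num.sqrt (I1 ^+ 2 + I2 ^+ 2).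
have hS : S ^+ 2 = I1 ^+ 2 + I2 ^+ 2 by rewrite sqr_sqrtr.
have S0 : 0 <= S by exact: sqrtr_ge0.
set A := Az (Complex a b) in ha0.
have A0 : 0 < A by exact: lt_le_trans ha0.
set u := Num.sqrt A.
have u0 : 0 < u by rewrite sqrtr_gt0.
have hu : u ^+ 2 = A by rewrite sqr_sqrtr // ltW.
set Aw := \int[mu]_(x in setT) ((x - E) ^+ 2 + dl ^+ 2)^-1.
have hIw : Iw = dl * Aw by rewrite /Iw -RintegralZl.
have main : S ^+ 2 <= S * dl * (u^-1 * A + u^-1^-1 * Aw).
  rewrite hS.
  have e1 : I1 ^+ 2 + I2 ^+ 2 = \int[mu]_(x in setT)
      (I1 * ((x - a) / ((x - a) ^+ 2 + b ^+ 2) - (x - E) / ((x - E) ^+ 2 + dl ^+ 2)) +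
       I2 * (b / ((x - a) ^+ 2 + b ^+ 2) - dl / ((x - E) ^+ 2 + dl ^+ 2))).
    rewrite RintegralD //; last first.
      apply: int_good; apply: goodZ; apply: goodB; [exact: goodZ (good_invP a bn)| exact: goodZ (good_invP E dn)].
      apply: int_good; apply: goodZ; apply: goodB; [exact: good_frac| exact: good_frac].
    rewrite RintegralZl //; last first.
      apply: int_good; apply: goodB; [exact: good_frac| exact: good_frac].
    rewrite RintegralZl //; last first.
      apply: int_good; apply: goodB; [exact: goodZ (good_invP a bn)| exact: goodZ (good_invP E dn)].
    rewrite RintegralB // RintegralB //.
  rewrite e1 /A /Az /= -/Aw.
  have -> : S * dl * (u^-1 * (\int[mu]_(x in setT) ((x - a) ^+ 2 + b ^+ 2)^-1) + u^-1^-1 * Aw)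
     = \int[mu]_(x in setT) (S * dl * (u^-1 * ((x - a) ^+ 2 + b ^+ 2)^-1 + u^-1^-1 * ((x - E) ^+ 2 + dl ^+ 2)^-1)).
    rewrite RintegralZl //; last first.
      apply: int_good; apply: goodD; apply: goodZ; exact: good_invP.
    rewrite RintegralD //; last first.
      by apply: int_good; apply: goodZ; exact: good_invP.
      by apply: int_good; apply: goodZ; exact: good_invP.
    by rewrite RintegralZl // RintegralZl.
  apply: le_Rintegral => //.
  - apply: int_good; apply: goodD; apply: goodZ; apply: goodB.
    + exact: good_frac.
    + exact: good_frac.
    + exact: goodZ (good_invP a bn).
    + exact: goodZ (good_invP E dn).
  - apply: int_good; apply: goodZ; apply: goodD; apply: goodZ; exact: good_invP.
  move=> x _; apply: pw => //.
  + by rewrite invr_gt0.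
  + exact: ltW.
  + have -> : x - E - (x - a) = a - E by ring.
    have := mulr_gt0 b0 dl0; nra.
rewrite invrK in main.
have ew0 : 0 <= ew by apply: le_trans hw; exact: sqrtr_ge0.
have hIw1 : Iw <= ew.
  apply: le_trans hw; apply: le_trans (ler_norm Iw) _.
  rewrite -sqrtr_sqr ler_sqrt; last by apply: addr_ge0; exact: sqr_ge0.
  by rewrite lerDr sqr_ge0.
have uA : u^-1 * A = u by rewrite -hu expr2 mulKf // gt_eqF.
rewrite uA in main.
have main2 : S ^+ 2 <= S * ((dl + ew) * u).
  apply: le_trans main _; rewrite -mulrA; apply: ler_wpM2l => //.
  have -> : dl * (u + u * Aw) = dl * u + (dl * Aw) * u by ring.
  rewrite -hIw mulrDl; apply: lerD => //; apply: ler_wpM2r => //; exact: ltW.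
have Sle : S <= (dl + ew) * u.
  have K0 : 0 <= (dl + ew) * u by apply: mulr_ge0; [apply: addr_ge0 => //; exact: ltW| exact: ltW].
  move: main2 K0 S0; set K := (dl + ew) * u; nra.
have tr := tri Rw Iw I1 I2.
have e1 : Rw + I1 = Rz by rewrite /I1; ring.
have e2 : Iw + I2 = Iz by rewrite /I2; ring.
rewrite e1 e2 -/S in tr.
have ka0 : 0 <= ka by lra.
have sa : Num.sqrt a0 <= u by rewrite ler_sqrt // ltW.
have ew3 : ew <= ka * u / 3.
  apply: le_trans ew2 _; rewrite ler_pM2r // ?ler_wpM2l //; lra.
have fin : Num.sqrt (Rz ^+ 2 + Iz ^+ 2) <= ka * u.
  apply: le_trans tr _; apply: le_trans (lerD hw Sle) _.
  have : dl * u <= ka / 3 * u by apply: ler_wpM2r => //; exact: ltW.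
  have : ew * u <= ka / 3 * u by apply: ler_wpM2r => //; exact: ltW.
  lra.
rewrite -[Az _]/A -hu -exprMn; apply: lerXn2r => //.
- by rewrite nnegrE sqrtr_ge0.
- by rewrite nnegrE; apply: mulr_ge0 => //; exact: ltW.
Qed.

End K.

Set Implicit Arguments.

Section L.
Variable R : realType.
Variable mu : probability R R.

Lemma Rint_pos (h : R -> R) : good h -> (forall x, 0 < h x) ->
  0 < \int[mu]_(x in setT) h x.
Proof.
move=> gh hp; have ih := @int_good R mu _ gh.
rewrite lt_def Rintegral_ge0 ?andbT; last by move=> x _; exact: ltW.
apply/negP => /eqP h0.
have fin := integrable_fin_num measurableT ih.
have i0 : (\int[mu]_(x in setT) (EFin \o h) x = 0)%E.
  by rewrite -(fineK fin); congr EFin; rewrite -h0.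
have i1 : (\int[mu]_(x in setT) `|(EFin \o h) x| = 0)%E.
  rewrite -i0; apply: eq_integral => x _ /=; rewrite ger0_norm //; exact: ltW.
have mh : measurable_fun setT (EFin \o h).
  by apply/measurable_EFinP; apply: continuous_measurable_fun; case: gh.
have := (ae_eq_integral_abs mu measurableT mh).1 i1.
case=> N [mN muN sub].
have : (mu setT <= mu N)%E.
  apply: le_measure; rewrite ?inE //.
  move=> x _; apply: sub => /= hx; have := hx I; move=> [] /eqP.
  by rewrite gt_eqF.
by rewrite muN (probability_setT mu) lee_fin ler10.
Qed.


Lemma A_lower (E : R) : exists2 a0, 0 < a0 &
  forall z, `|cre z - E| <= 1 -> 0 < cim z -> cim z <= 1 -> a0 <= Az R mu z.
Proof.
set c := `|E| + 2.
have c0 : 0 < c by rewrite /c; have := normr_ge0 E; lra.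
have cn : c != 0 by exact: lt0r_neq0.
have gh : good (fun x => 2^-1 * ((x - 0) ^+ 2 + c ^+ 2)^-1).
  exact: goodZ (good_invP 0 cn).
exists (\int[mu]_(x in setT) (2^-1 * ((x - 0) ^+ 2 + c ^+ 2)^-1)).
  apply: Rint_pos => // x; apply: mulr_gt0; first by rewrite invr_gt0.
  rewrite invr_gt0; apply: ltr_wpDl; [exact: sqr_ge0| exact: exprn_gt0].
move=> [a b] /= ha b0 b1.
have bn : b != 0 by exact: lt0r_neq0.
apply: le_Rintegral => //.
- exact: int_good gh.
- exact: int_good (good_invP a bn).
move=> x _.
have P0 : 0 < (x - a) ^+ 2 + b ^+ 2 by apply: ltr_wpDl; [exact: sqr_ge0| exact: exprn_gt0].
have Q0 : 0 < (x - 0) ^+ 2 + c ^+ 2 by apply: ltr_wpDl; [exact: sqr_ge0| exact: exprn_gt0].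
rewrite -invfM lef_pV2 ?posrE //; last by apply: mulr_gt0.
have hA : `|a| <= `|E| + 1.
  have : `|a| <= `|a - E| + `|E| by have := ler_normD (a - E) E; rewrite subrK.
  lra.
have hA2 : a ^+ 2 <= (`|E| + 1) ^+ 2.
  rewrite -(real_normK (num_real a)); apply: lerXn2r; rewrite ?nnegrE //.

rewrite /c subr0 /=; have := normr_ge0 E; have := sqr_ge0 (x + a); nra.
Qed.

End L.


Section M.
Variable R : realType.
Variable mu : probability R R.

Lemma cabs_tri (p q : R[i]) : cabs (p + q) <= cabs p + cabs q.
Proof. by case: p => ? ?; case: q => ? ?; rewrite /cabs /=; exact: tri. Qed.

Lemma cim_eq (t : R) (zeta z : R[i]) :
  cR t * z - zeta = cR (t - 1) * Fmu mu z ->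
  t * cim z - cim zeta = (t - 1) * (cim (stieltjes mu z) /
     (cre (stieltjes mu z) ^+ 2 + cim (stieltjes mu z) ^+ 2)).
Proof.
case: z => a b; case: zeta => x y.
move=> h; have := congr1 (@cim R) h.
have -> : cim (cR t * (a +i* b)%C - (x +i* y)%C) = t * cim (a +i* b)%C - cim (x +i* y)%C.
  by rewrite /=; ring.
move=> ->; rewrite /Fmu /=; ring.
Qed.

End M.

Theorem lemma3p1 (R : realType) (nac npp nout : nat) (mu : probability R R)
  (t E : R) (omega : R[i] -> R[i]) (omegab : R -> option R[i]) :
  assumptionA nac npp nout mu ->
  1 < t ->
  stieltjes_zero mu E ->
  subordination mu t omega ->
  boundary_extension omega omegab ->
  exists M : R, 0 < M /\
    forall (x : R) (w : R[i]), omegab x = Some w -> M <= cabs (w - cR E).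
Proof.
move=> _ t1 hz [_ himw _ heq] hb.
have t0 : 0 < t by lra.
set ka := (t - 1) / (2 * t).
have ka0 : 0 < ka by rewrite /ka divr_gt0 //; lra.
have kat : ka ^+ 2 * t < t - 1.
  have -> : ka ^+ 2 * t = (t - 1) * ((t - 1) / (4 * t)).
    by rewrite /ka; field; rewrite gt_eqF.
  rewrite -[X in _ < X]mulr1 ltr_pM2l; last lra.
  by rewrite ltr_pdivrMr; [lra | rewrite mulr_gt0 //].
have [a0 a00 ha0] := A_lower mu E.
have sa0 : 0 < Num.sqrt a0 by rewrite sqrtr_gt0.
set ep := Num.min (ka / 3) (ka * Num.sqrt a0 / 3).
have ep0 : 0 < ep by rewrite lt_min; apply/andP; split; apply: divr_gt0 => //; exact: mulr_gt0.
have [d d0 hd] := hz ep ep0.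
set dl := Num.min (d / 2) (Num.min (ka / 3) (1 / 2)).
have dl0 : 0 < dl.
  by rewrite !lt_min; apply/and3P; split; apply: divr_gt0.
have dld : dl < d.
  have : dl <= d / 2 by rewrite /dl ge_min lexx.
  lra.
have dlk : dl <= ka / 3 by rewrite /dl !ge_min; apply/orP; right; apply/orP; left.
have dlh : dl <= 1 / 2 by rewrite /dl !ge_min; apply/orP; right; apply/orP; right.
have hw := hd dl dl0 dld.
exists (dl / 2); split; first exact: divr_gt0.
move=> x w0 hx; rewrite leNgt; apply/negP => hlt.
have := hb x; rewrite hx => hc.
have e0 : 0 < dl / 2 - cabs (w0 - cR E) by lra.
have [d' d'0 hd'] := hc _ e0.
set zeta := (x +i* (d' / 2))%C.
have Cz : Cplus zeta by rewrite /Cplus /=; exact: divr_gt0.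
have hzx : cabs (zeta - cR x) < d'.
  rewrite /cabs /= subrr expr0n /= add0r subr0 sqrtr_sqr ger0_norm; last by apply: divr_ge0; lra.
  lra.
have h1 := hd' zeta Cz hzx.
set z := omega zeta in h1.
have hzE : cabs (z - cR E) < dl.
  have -> : z - cR E = (z - w0) + (w0 - cR E) by rewrite addrA subrK.
  apply: le_lt_trans (cabs_tri _ _) _; lra.
have bz : cim zeta <= cim z := himw zeta Cz.
have bz0 : 0 < cim z by apply: lt_le_trans bz; exact: Cz.
have eq := cim_eq (heq zeta Cz); rewrite -/z in eq.
have imz : cim zeta = d' / 2 by [].
rewrite imz in eq.
have ep1 : ep <= ka / 3 by rewrite /ep ge_min lexx.
have ep2 : ep <= ka * Num.sqrt a0 / 3 by rewrite /ep ge_min lexx orbT.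
have hwl := ltW hw.
clear h1; clearbody z; case: z hzE bz bz0 eq => a b hzE bz bz0 eq.
move: hzE; rewrite /cabs /= subr0 => hzE; rewrite /= in bz bz0.
have hz2 : (a - E) ^+ 2 + b ^+ 2 < dl ^+ 2.
  have s0 : 0 <= (a - E) ^+ 2 + b ^+ 2 by apply: addr_ge0; exact: sqr_ge0.
  rewrite -(sqr_sqrtr s0); have := sqrtr_ge0 ((a - E) ^+ 2 + b ^+ 2).
  move: hzE; set s := Num.sqrt _; nra.
have hae : `|a - E| <= 1.
  rewrite -(ler_pXn2r (n:=2)) ?nnegrE // ?expr1n.
  rewrite real_normK ?num_real //.
  have := sqr_ge0 b; have : dl ^+ 2 <= 1 / 4.
    have : dl ^+ 2 <= (1 / 2) ^+ 2 by apply: lerXn2r; rewrite ?nnegrE //; exact: ltW.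
    lra.
  lra.
have hb1 : b <= 1.
  have : dl ^+ 2 <= (1 / 2) ^+ 2 by apply: lerXn2r; rewrite ?nnegrE //; exact: ltW.
  have := sqr_ge0 (a - E); nra.
have ha := ha0 (a +i* b)%C hae bz0 hb1.
have hk := @key R mu (a +i* b)%C E dl ep ka a0 dl0 bz0 hz2 hwl a00 ha ep1 ep2 dlk.
have him := @im_m R mu (a +i* b)%C bz0.
move: hk eq him ha; rewrite /cabs.
set m1 := cre (stieltjes mu _); set m2 := cim (stieltjes mu _).
set A := Az _ _ _ => hk eq him ha.
have n0 : 0 <= m1 ^+ 2 + m2 ^+ 2 by apply: addr_ge0; exact: sqr_ge0.
rewrite sqr_sqrtr // in hk.
have A0 : 0 < A by exact: lt_le_trans ha.
have m20 : 0 < m2 by rewrite him /=; exact: mulr_gt0.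
have np : 0 < m1 ^+ 2 + m2 ^+ 2 by apply: ltr_wpDl; [exact: sqr_ge0| exact: exprn_gt0].
set n := m1 ^+ 2 + m2 ^+ 2 in n0 np hk eq.
have eq2 : (t * b - d' / 2) * n = (t - 1) * (b * A).
  by rewrite eq -him /=; field; rewrite gt_eqF.
have f1 : t * b * n <= t * b * (ka ^+ 2 * A).
  by apply: ler_wpM2l => //; apply: mulr_ge0; lra.
have f2 : t * b * (ka ^+ 2 * A) < (t - 1) * (b * A).
  have -> : t * b * (ka ^+ 2 * A) = (ka ^+ 2 * t) * (b * A) by ring.
  by rewrite ltr_pM2r //; exact: mulr_gt0.
have f3 : 0 < d' / 2 * n by apply: mulr_gt0 => //; exact: divr_gt0.
have : (t * b - d' / 2) * n = t * b * n - d' / 2 * n by ring.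
lra.
Qed.
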